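(* Consider the discrete-time linear controller $x(t+1)=Fx(t)+Gy(t)$, $u(t)=Hx(t)$, $x(0)=x^{\mathrm{ini}}$, with $F\in\mathbb{Z}^{n\times n}$, $G\in\mathbb{Q}^{n\times p}$, $H\in\mathbb{Q}^{m\times n}$, $x^{\mathrm{ini}}\in\mathbb{Q}^n$ and inputs $y(t)\in\mathbb{Q}^p$ for all $t\ge 0$. Let $\bar F=TFT^{-1}=\mathrm{diag}(C_0,\dots,C_{\kappa-1})$ be the rational canonical form of $F$ with $T\in\mathbb{Q}^{n\times n}$ nonsingular, and let $L,s_1,s_2$ be scale factors with $1/L,1/s_1,1/s_2\in\mathbb{N}$ such that $\bar G:=TG/s_1\in\mathbb{Z}^{n\times p}$, $\bar H:=HT^{-1}/s_2\in\mathbb{Z}^{m\times n}$, $z^{\mathrm{ini}}:=Tx^{\mathrm{ini}}/(Ls_1)\in\mathbb{Z}^n$ and $\bar y(t):=y(t)/L\in\mathbb{Z}^p$ for all $t\ge0$. Let $q$ be a prime, $N$ a power of two, $n$ a power of two with $N/n\in\mathbb{N}$, assume $np\le N$, and let $\tau=2^{\lceil\log_2 m\rceil}$ with $\tau\le N/n$. Define the reformulated controller over $R_q$: $$\tilde z(t+1)=\sum_{i=0}^{\kappa-1}\tilde F_i\cdot\tilde z_{r_i}(t)+X^{-N/n}\cdot\tilde z(t)+\tilde G\cdot\tilde y(t),\qquad \tilde u(t)=\tilde H\cdot \mathrm{Slot}_n(\tilde z(t)),\qquad \tilde z(0)=\mathrm{Pack}(z^{\mathrm{ini}}),$$ where $\tilde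 z_{r_i}(t):=\mathrm{Slot}_1(X^{-r_iN/n}\cdot\tilde z(t))\in\mathbb{Z}_q$, and its output $u'(t):=(Ls_1s_2)\cdot\mathrm{Unpack}(\tilde u(t))$. If $$\sup_{t\ge0}\max\left\{\left\|\frac{Tx(t)}{Ls_1}\right\|,\ \left\|\frac{u(t)}{Ls_1s_2}\right\|\right\}<\frac q2,$$ then $u'(t)=u(t)$ for all $t\ge0$.
   Context: Companion matrix: a $d\times d$ matrix with arbitrary first column, entries $1$ at positions $(i,i+1)$, $i=1,\dots,d-1$, and zeros elsewhere. The rational canonical form of $F$ is the unique matrix $\mathrm{diag}(C_0,\dots,C_{\kappa-1})$ similar to $F$ over $\mathbb{Q}$ with each $C_i$ a companion matrix and $\det(sI-C_i)\mid\det(sI-C_{i+1})$; for integer $F$ it is an integer matrix. $\|\cdot\|$ is the infinity norm (for polynomials, the maximum absolute coefficient). $\mathbb{Z}_q:=\mathbb{Z}\cap[-q/2,q/2)$ and $a \bmod q:=a-\lfloor (a+q/2)/q\rfloor q$ (applied entrywise/coefficientwise). $R_q:=\mathbb{Z}_q[X]/\langle X^N+1\rangle$: polynomials of degree $<N$ with coefficients in $\mathbb{Z}_q$, with addition and multiplication being usual polynomial operations followed by reduction using $X^N=-1$ and coefficientwise $\bmod\ q$; $X^{-k}$ denotes the inverse of $X^k$ in $R_q$ (namely $-X^{N-k}$ for $0<k\le N$). For $a\in\mathbb{Z}^n$, $\mathrm{Pack}(a):=\sum_{i=0}^{n-1}(a_i\bmod q)X^{iN/n}$. For a power of two $\alpha$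 and $\mathrm{a}=\sum_{i=0}^{N-1}\mathrm{a}_iX^i$, $\mathrm{Slot}_\alpha(\mathrm{a}):=\sum_{i=0}^{\alpha-1}\mathrm{a}_{iN/\alpha}X^{iN/\alpha}$ (so $\mathrm{Slot}_1$ gives the constant term). $\mathrm{Unpack}(\mathrm{a}):=[\mathrm{a}_0,\mathrm{a}_{N/(n\tau)},\dots,\mathrm{a}_{(m-1)N/(n\tau)}]^\top\in\mathbb{Z}_q^m$. Let $S\in\mathbb{Z}^{n\times n}$ have entries $S_{i,i+1}=1$ for $i=1,\dots,n-1$, $S_{n,1}=-1$, and zeros elsewhere. Let $r_0=0$ and $r_i$ be the sum of the sizes of $C_0,\dots,C_{i-1}$ (the 0-based column index where block $C_i$ starts), and let $\bar F'_i\in\mathbb{Z}^n$ be the $(r_i+1)$-th column of $\bar F-S$; $\tilde F_i:=\mathrm{Pack}(\bar F'_i)$. With $\bar G=(\bar G_{i,j})$: $\tilde G_i:=\sum_{j=0}^{p-1}\bar G_{i,j}X^{-j}\bmod q$ and $\tilde G:=\sum_{i=0}^{n-1}\tilde G_i\cdot X^{iN/n}$. With $\bar y(t)=[\bar y_0(t),\dots,\bar y_{p-1}(t)]^\top$: $\tilde y(t):=\sum_{j=0}^{p-1}\bar y_j(t)X^j\bmod q$. With $\bar H=(\bar H_{i,j})$: $\tilde H_i:=\sum_{j=0}^{n-1}\bar H_{i,j}X^{-jN/n}\bmod q$ and $\tilde H:=\sum_{i=0}^{m-1}\tilde H_i\cdot X^{iN/(n\tau)}$. Matrix/row/column indices of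 $\bar G,\bar H$ are 0-based. *)

(* Defs.v *)
From HB Require Import structures.
From mathcomp Require Import all_boot all_order all_algebra.
Set Implicit Arguments. Unset Strict Implicit. Unset Printing Implicit Defensive.
Import Order.TTheory GRing.Theory Num.Theory.
Local Open Scope ring_scope.

Definition companion (d : nat) (a : nat -> int) : 'M[int]_d :=
  \matrix_(i < d, j < d)
    if (j : nat) == 0%N then a (i : nat) else if (j : nat) == i.+1 then 1 else 0.

(* r_k : 0-based starting index of block k, given block sizes ds *)
Definition bstart (ds : seq nat) (k : nat) : nat := sumn (take k ds).

Definition blk (ds : seq nat) (i : nat) : nat :=
  count (fun k => bstart ds k.+1 <= i)%N (iota 0 (size ds)).

(* entry (i,j) (0-based) of diag(C_0, ..., C_{kappa-1}), C_k = companion (nth 0 ds k) (c k) *)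
Definition Fbar_entry (ds : seq nat) (c : nat -> nat -> int) (i j : nat) : int :=
  let k := blk ds i in
  if blk ds j == k then
    let a := (i - bstart ds k)%N in
    let b := (j - bstart ds k)%N in
    if b == 0%N then c k a else if b == a.+1 then 1 else 0
  else 0.

Definition Fbar_mx (n : nat) (ds : seq nat) (c : nat -> nat -> int) : 'M[int]_n :=
  \matrix_(i < n, j < n) Fbar_entry ds c i j.

(* "diag(C_0..C_{kappa-1}) with C_k companion, sizes ds, first columns c k,
   det(sI - C_k) | det(sI - C_{k+1})", i.e. it is in rational canonical form *)
Definition rcf_data (n : nat) (ds : seq nat) (c : nat -> nat -> int) : Prop :=
  all (fun d => 0 < d)%N ds /\ sumn ds = n /\
  forall k, (k.+1 < size ds)%N ->
    char_poly (map_mx intr (companion (nth 0%N ds k) (c k)) : 'M[rat]_(nth 0%N ds k))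
    %| char_poly (map_mx intr (companion (nth 0%N ds k.+1) (c k.+1))
                  : 'M[rat]_(nth 0%N ds k.+1)).

(* S : S_{i,i+1} = 1, S_{n,1} = -1 (1-based); here 0-based entries *)
Definition S_entry (n i j : nat) : int :=
  if j == i.+1 then 1 else if (i == n.-1) && (j == 0%N) then -1 else 0.

Fixpoint xtraj (n p : nat) (F : 'M[rat]_n) (G : 'M[rat]_(n, p))
  (xini : 'cV[rat]_n) (y : nat -> 'cV[rat]_p) (t : nat) : 'cV[rat]_n :=
  match t with
  | 0 => xini
  | t'.+1 => F *m xtraj F G xini y t' + G *m y t'
  end.

Definition vnorm (k : nat) (v : 'cV[rat]_k) : rat := \big[Num.max/0]_(i < k) `|v i 0|.

(* a mod q := a - floor((a + q/2)/q) q  ( = a - floor((2a+q)/(2q)) q ) *)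
Definition modq (q : nat) (a : int) : int :=
  a - ((2 * a + q%:Z) %/ (2 * q%:Z))%Z * q%:Z.

(* reduction using X^N = -1 : coefficient i *)
Definition nred (N : nat) (a : {poly int}) (i : nat) : int :=
  \sum_(k < size a | (k %% N)%N == i) (-1) ^+ (k %/ N)%N * a`_k.

(* canonical representative in R_q of an integer polynomial *)
Definition rq (N q : nat) (a : {poly int}) : {poly int} :=
  \poly_(i < N) modq q (nred N a i).

(* X^{-k} in R_q  (X^{2N} = 1) *)
Definition Xneg (N q k : nat) : {poly int} := rq N q 'X^(2 * N - k %% (2 * N)).

Definition Pack (N q n : nat) (a : 'cV[int]_n) : {poly int} :=
  \sum_(i < n) (modq q (a i 0))%:P * 'X^(i * (N %/ n)).

Definition Slot (N alpha : nat) (a : {poly int}) : {poly int} :=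
  \sum_(i < alpha) (a`_(i * (N %/ alpha)))%:P * 'X^(i * (N %/ alpha)).

Definition Unpack (N n tau m : nat) (a : {poly int}) : 'cV[int]_m :=
  \col_(i < m) a`_(i * (N %/ (n * tau))).

Definition Ftil (N q n : nat) (ds : seq nat) (c : nat -> nat -> int) (k : nat) : {poly int} :=
  Pack N q (\col_(i < n) (Fbar_entry ds c i (bstart ds k) - S_entry n i (bstart ds k))).

Definition Gtil (N q n p : nat) (Gbar : 'M[int]_(n, p)) : {poly int} :=
  rq N q (\sum_(i < n)
            rq N q (\sum_(j < p) (Gbar i j)%:P * Xneg N q j) * 'X^(i * (N %/ n))).

Definition Htil (N q n m tau : nat) (Hbar : 'M[int]_(m, n)) : {poly int} :=
  rq N q (\sum_(i < m)
            rq N q (\sum_(j < n) (Hbar i j)%:P * Xneg N q (j * (N %/ n)))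
              * 'X^(i * (N %/ (n * tau)))).

Definition ytil (N q p : nat) (ybar : 'cV[int]_p) : {poly int} :=
  rq N q (\sum_(j < p) (ybar j 0)%:P * 'X^j).

Fixpoint ztraj (N q n p : nat) (ds : seq nat) (c : nat -> nat -> int)
  (Gbar : 'M[int]_(n, p)) (zini : 'cV[int]_n) (ybar : nat -> 'cV[int]_p)
  (t : nat) : {poly int} :=
  match t with
  | 0 => Pack N q zini
  | t'.+1 =>
      let z := ztraj N q ds c Gbar zini ybar t' in
      rq N q (\sum_(k < size ds)
                 Ftil N q n ds c k * Slot N 1 (rq N q (Xneg N q (bstart ds k * (N %/ n)) * z))
              + Xneg N q (N %/ n) * z
              + Gtil N q Gbar * ytil N q (ybar t'))
  end.

Definition util (N q n p m tau : nat) (ds : seq nat) (c : nat -> nat -> int)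
  (Gbar : 'M[int]_(n, p)) (Hbar : 'M[int]_(m, n)) (zini : 'cV[int]_n)
  (ybar : nat -> 'cV[int]_p) (t : nat) : {poly int} :=
  rq N q (Htil N q tau Hbar * Slot N n (ztraj N q ds c Gbar zini ybar t)).

Definition tau_of (m : nat) : nat := 2 ^ up_log 2 m.

(* Main.v *)
Require Import Defs.
From HB Require Import structures.
From mathcomp Require Import all_boot all_order all_algebra.
From mathcomp Require Import zify ring lra.
Set Implicit Arguments. Unset Strict Implicit. Unset Printing Implicit Defensive.
Import Order.TTheory GRing.Theory Num.Theory.
Local Open Scope ring_scope.

Section Blocks.
Local Open Scope nat_scope.
Lemma bstart_mono (ds : seq nat) (k k' : nat) : k <= k' -> bstart ds k <= bstart ds k'.
Proof.
rewrite /bstart; elim: ds k k' => [|d ds IH] [|k] [|k'] //= hk.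
by rewrite leq_add2l; apply: IH.
Qed.

Lemma bstartS (ds : seq nat) (k : nat) : k < size ds ->
  bstart ds k.+1 = bstart ds k + nth 0 ds k.
Proof.
rewrite /bstart; elim: ds k => [|d ds IH] [|k] //= hk.
- by rewrite take0 /= addn0.
- by rewrite IH // addnA.
Qed.

Lemma bstart_size (ds : seq nat) : bstart ds (size ds) = sumn ds.
Proof. by rewrite /bstart take_size. Qed.

Lemma blk_unique (ds : seq nat) (i k : nat) : k < size ds ->
  bstart ds k <= i < bstart ds k.+1 -> blk ds i = k.
Proof.
move=> hk /andP[h1 h2]; rewrite /blk.
have -> : size ds = k + (size ds - k) by rewrite subnKC // ltnW.
rewrite iotaD count_cat add0n.
rewrite (@eq_in_count _ _ predT); last first.
  move=> l; rewrite mem_iota add0n => /andP[_ hl].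
  by apply: leq_trans h1; apply: bstart_mono.
rewrite count_predT size_iota (@eq_in_count _ _ pred0) ?count_pred0 ?addn0 //.
move=> l; rewrite mem_iota => /andP[hl _] /=.
apply/negbTE; rewrite -ltnNge; apply: leq_trans h2 _; apply: bstart_mono; done.
Qed.

Lemma blk_exists (ds : seq nat) (i : nat) : i < sumn ds ->
  exists2 k, k < size ds & bstart ds k <= i < bstart ds k.+1.
Proof.
rewrite /bstart; elim: ds i => [|d ds IH] i //= hi.
case: (ltnP i d) => hid.
  by exists 0 => //=; rewrite take0 /= addn0.
have [k hk hk2] : exists2 k, k < size ds & sumn (take k ds) <= i - d < sumn (take k.+1 ds).
  by apply: IH; lia.
exists k.+1 => //=; move: hk2; lia.
Qed.

Lemma blk_spec (ds : seq nat) (i : nat) : i < sumn ds ->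
  blk ds i < size ds /\ bstart ds (blk ds i) <= i < bstart ds (blk ds i).+1.
Proof.
move=> hi; have [k hk hk2] := blk_exists hi.
by rewrite (blk_unique hk hk2).
Qed.

Lemma bstart_lt (ds : seq nat) (l l' : nat) : all (fun d => 0 < d) ds ->
  l < l' -> l' <= size ds -> bstart ds l < bstart ds l'.
Proof.
move=> /all_nthP hpos hl hl'.
have hls : l < size ds by apply: leq_trans hl hl'.
have := hpos 0 _ hls; rewrite /= => hd.
apply: (@leq_trans (bstart ds l.+1)); last exact: bstart_mono.
by rewrite bstartS // -addn1 leq_add2l.
Qed.

Lemma FS_zero (n : nat) (ds : seq nat) (c : nat -> nat -> int) (i j : nat) :
  sumn ds = n -> i < n -> j < n ->
  (forall l, l < size ds -> j != bstart ds l) ->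
  Fbar_entry ds c i j = S_entry n i j.
Proof.
move=> hs hi hj hnot.
have [hb1 /andP[hb2 hb3]] := blk_spec (ds := ds) (i := j) ltac:(lia).
have [hk1 /andP[hk2 hk3]] := blk_spec (ds := ds) (i := i) ltac:(lia).
have hne := hnot _ hb1.
have hjgt : bstart ds (blk ds j) < j by rewrite ltn_neqAle eq_sym hne hb2.
have -> : S_entry n i j = if j == i.+1 then 1%R else 0%R.
  rewrite /S_entry; case: eqP => // _.
  by rewrite (_ : (j == 0) = false) ?andbF //; apply/negbTE; lia.
rewrite /Fbar_entry; case: eqP => [e|ne].
  rewrite -e; rewrite (_ : (j - bstart ds (blk ds j) == 0) = false); last first.
    by apply/negbTE; lia.
  have -> : (j - bstart ds (blk ds j) == (i - bstart ds (blk ds j)).+1)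
          = (j == i.+1).
    by apply/eqP/eqP; move: hk2 hjgt; rewrite -e; lia.
  by [].
case: eqP => // hji; exfalso; apply: ne; apply/esym.
apply: blk_unique => //; apply/andP; split; lia.
Qed.

End Blocks.

Fixpoint zbt (n p : nat) (Fb : 'M[int]_n) (Gb : 'M[int]_(n, p)) (z0 : 'cV[int]_n)
  (yb : nat -> 'cV[int]_p) (t : nat) : 'cV[int]_n :=
  if t is t'.+1 then Fb *m zbt Fb Gb z0 yb t' + Gb *m yb t' else z0.

Lemma bstart_inj (ds : seq nat) (l l' : nat) : all (fun d => 0 < d)%N ds ->
  (l < size ds)%N -> (l' < size ds)%N -> bstart ds l = bstart ds l' -> l = l'.
Proof.
move=> hpos hl hl' e; case: (ltngtP l l') => // h.
- by have := bstart_lt hpos h (ltnW hl'); rewrite e ltnn.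
- by have := bstart_lt hpos h (ltnW hl); rewrite e ltnn.
Qed.

Section NR.
Variables (q N : nat).
Hypothesis q_prime : prime q.
Hypothesis N_gt0 : (0 < N)%N.

Definition phi (x : int) : 'F_q := x%:~R.
Definition sg (j k : nat) : 'F_q :=
  if (j %% (2 * N) == k %% (2 * N))%N then 1
  else if (j %% (2 * N) == (k + N) %% (2 * N))%N then -1 else 0.
Definition E (a : {poly int}) (k : nat) : 'F_q :=
  \sum_(0 <= j < size a) sg j k * phi a`_j.

Lemma phiD (x y : int) : phi (x + y) = phi x + phi y. Proof. exact: intrD. Qed.
Lemma phiM (x y : int) : phi (x * y) = phi x * phi y. Proof. exact: intrM. Qed.
Lemma phiN (x : int) : phi (- x) = - phi x. Proof. exact: intrN. Qed.
Lemma phi0 : phi 0 = 0. Proof. by []. Qed.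

Lemma phi_q : phi q%:Z = 0.
Proof.
rewrite /phi -pmulrn; apply/eqP; rewrite -(dvdn_pcharf (pchar_Fp q_prime)).
exact: dvdnn.
Qed.

Lemma phi_modq (x : int) : phi (modq q x) = phi x.
Proof. by rewrite /modq phiD phiN phiM phi_q mulr0 oppr0 addr0. Qed.

Lemma E_widen (a : {poly int}) (k b : nat) : (size a <= b)%N ->
  E a k = \sum_(0 <= j < b) sg j k * phi a`_j.
Proof.
move=> hb; rewrite /E (big_cat_nat (leq0n (size a)) hb) /=.
rewrite [X in _ + X]big1_seq ?addr0 // => j /andP[_].
rewrite mem_iota => /andP[hj _]; by rewrite nth_default // phi0 mulr0.
Qed.

Lemma E_add (a b : {poly int}) (k : nat) : E (a + b) k = E a k + E b k.
Proof.
set s := maxn (size a) (size b).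
rewrite (@E_widen (a + b) k s) ?size_polyD // (@E_widen a k s) ?leq_maxl //.
rewrite (@E_widen b k s) ?leq_maxr // -big_split /=.
by apply: eq_bigr => j _; rewrite coefD phiD mulrDr.
Qed.

Lemma E_0 (k : nat) : E 0 k = 0.
Proof. by rewrite /E size_poly0 big_geq. Qed.

Lemma E_opp (a : {poly int}) (k : nat) : E (- a) k = - E a k.
Proof.
rewrite /E size_polyN -sumrN; apply: eq_bigr => j _.
by rewrite coefN phiN mulrN.
Qed.

Lemma E_sum (I : Type) (r : seq I) (P : pred I) (f : I -> {poly int}) k :
  E (\sum_(i <- r | P i) f i) k = \sum_(i <- r | P i) E (f i) k.
Proof.
elim/big_rec2: _; first exact: E_0.
by move=> i y1 y2 _ <-; rewrite E_add.
Qed.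

Lemma E_scale (c : int) (a : {poly int}) (k : nat) : E (c%:P * a) k = phi c * E a k.
Proof.
have hs : (size (c%:P * a)%R <= size a)%N.
  by apply/leq_sizeP => j hj; rewrite coefCM nth_default // mulr0.
rewrite (E_widen k hs) /E mulr_sumr; apply: eq_bigr => j _.
by rewrite coefCM phiM mulrCA.
Qed.

Lemma sg_modeq (j k1 k2 : nat) : (k1 = k2 %[mod 2 * N])%N -> sg j k1 = sg j k2.
Proof.
move=> h; have h2 : ((k1 + N) %% (2 * N) = (k2 + N) %% (2 * N))%N.
  by rewrite -modnDml h modnDml.
by rewrite /sg h h2.
Qed.

Lemma E_modeq (a : {poly int}) (k1 k2 : nat) : (k1 = k2 %[mod 2 * N])%N -> E a k1 = E a k2.
Proof. by move=> h; apply: eq_bigr => j _; rewrite (sg_modeq j h). Qed.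

Lemma sg_shift (j k s : nat) : sg (j + s) (k + s) = sg j k.
Proof.
rewrite /sg -!(addnC s) eqn_modDl -addnA eqn_modDl; done.
Qed.

Lemma E_X (a : {poly int}) (s k : nat) : E ('X^s * a) (k + s) = E a k.
Proof.
have [->|a0] := eqVneq a 0; first by rewrite mulr0 !E_0.
have hs : (size ('X^s * a)%R <= size a + s)%N.
  apply/leq_sizeP => j hj; rewrite coefXnM; case: ifP => // _.
  by rewrite nth_default //; move: hj; move: (size a) => x; lia.
rewrite (E_widen _ hs) (big_cat_nat (leq0n s) (leq_addl _ _)) /=.
rewrite big1_seq ?add0r; last first.
  move=> j /andP[_]; rewrite mem_iota subn0 add0n => /andP[_ hj].
  by rewrite coefXnM hj phi0 mulr0.
rewrite -{1}(add0n s) big_addn addnK /E.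
apply: eq_bigr => j _; rewrite coefXnM ltnNge leq_addl /= addnK.
by rewrite sg_shift.
Qed.


Lemma modN_neq (k : nat) : ((k + N) %% (2 * N) != k %% (2 * N))%N.
Proof.
rewrite -{2}(addn0 k) eqn_modDl mod0n modn_small; lia.
Qed.

Lemma sg_N (j k : nat) : sg j (k + N) = - sg j k.
Proof.
rewrite /sg.
have e : ((k + N + N) %% (2 * N) = k %% (2 * N))%N.
  by rewrite -addnA addnn -mul2n modnDr.
rewrite e; have := modN_neq k.
move: (j %% (2 * N))%N ((k + N) %% (2 * N))%N (k %% (2 * N))%N => x y z hyz.
case: (x =P y) => h1; case: (x =P z) => h2 //=; rewrite ?opprK ?oppr0 //.
by move: hyz; rewrite -h1 -h2 eqxx.
Qed.

Lemma E_N (a : {poly int}) (k : nat) : E a (k + N) = - E a k.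
Proof. by rewrite /E -sumrN; apply: eq_bigr => j _; rewrite sg_N mulNr. Qed.

Lemma E_Xgen (a : {poly int}) (s k : nat) :
  E ('X^s * a) k = E a (k + 2 * N * s - s).
Proof.
rewrite -(E_X a s (k + 2 * N * s - s)); apply: E_modeq.
have hs : (s <= 2 * N * s)%N by rewrite leq_pmull //; lia.
rewrite subnK; last by move: hs; move: (2 * N * s)%N => x; lia.
by rewrite addnC (mulnC _ s) modnMDl.
Qed.

Definition eqv (a b : {poly int}) := forall k, E a k = E b k.

Lemma eqv_refl a : eqv a a. Proof. by []. Qed.
Lemma eqv_sym a b : eqv a b -> eqv b a. Proof. by move=> h k; rewrite h. Qed.
Lemma eqv_trans a b c : eqv a b -> eqv b c -> eqv a c.
Proof. by move=> h1 h2 k; rewrite h1 h2. Qed.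

Lemma eqv_add a a' b b' : eqv a a' -> eqv b b' -> eqv (a + b) (a' + b').
Proof. by move=> h1 h2 k; rewrite !E_add h1 h2. Qed.

Lemma eqv_sum (I : Type) (r : seq I) (P : pred I) (f g : I -> {poly int}) :
  (forall i, P i -> eqv (f i) (g i)) ->
  eqv (\sum_(i <- r | P i) f i) (\sum_(i <- r | P i) g i).
Proof. by move=> h k; rewrite !E_sum; apply: eq_bigr => i /h ->. Qed.

Lemma eqv_mulX a b s : eqv a b -> eqv ('X^s * a) ('X^s * b).
Proof. by move=> h k; rewrite !E_Xgen h. Qed.

Lemma eqv_mull a a' b : eqv a a' -> eqv (a * b) (a' * b).
Proof.
move=> h; rewrite -(coefK b) poly_def !mulr_sumr; apply: eqv_sum => i _.
rewrite -mul_polyC !(mulrCA _ _%:P) => k; rewrite !E_scale.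
by rewrite !(mulrC _ 'X^i) (eqv_mulX i h).
Qed.

Lemma eqv_mul a a' b b' : eqv a a' -> eqv b b' -> eqv (a * b) (a' * b').
Proof.
move=> h1 h2; apply: eqv_trans (eqv_mull b h1) _.
by rewrite !(mulrC a'); apply: eqv_mull.
Qed.

Lemma sg_small (j k : nat) : (j < N)%N -> (k < N)%N -> sg j k = if j == k then 1 else 0.
Proof.
move=> hj hk; rewrite /sg !modn_small; try lia.
case: eqP => // _; case: eqP => //; lia.
Qed.

Lemma E_small (a : {poly int}) (k : nat) : (size a <= N)%N -> (k < N)%N ->
  E a k = phi a`_k.
Proof.
move=> ha hk; rewrite (E_widen k ha).
transitivity (\sum_(0 <= j < N | j == k) phi a`_j); last first.
  by rewrite big_nat1_eq leq0n hk.
rewrite [RHS]big_mkcond /=; apply: eq_big_nat => j /andP[_ hj].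
by rewrite sg_small //; case: eqP; rewrite ?mul1r ?mul0r.
Qed.

Lemma E_Xn (s k : nat) : E 'X^s k = sg s k.
Proof.
rewrite /E size_polyXn big_nat_recr //= big1_seq ?add0r.
  by rewrite coefXn eqxx /phi mulr1.
move=> j /andP[_]; rewrite mem_iota subn0 add0n => hj.
by rewrite coefXn (ltn_eqF hj) /phi mulr0.
Qed.

Lemma E_lowN (a b : {poly int}) :
  (forall k, (k < N)%N -> E a k = E b k) -> eqv a b.
Proof.
move=> h k; rewrite -(E_modeq a (modn_mod k (2 * N))).
rewrite -(E_modeq b (modn_mod k (2 * N))).
have hr : (k %% (2 * N) < 2 * N)%N by rewrite ltn_pmod //; lia.
move: hr; set r := (k %% (2 * N))%N => hr.
case: (ltnP r N) => hrN; first exact: h.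
have -> : r = (r - N + N)%N by rewrite subnK.
by rewrite !E_N h //; lia.
Qed.

Lemma mod2N (j : nat) : (j %% (2 * N) = j %% N + odd (j %/ N) * N)%N.
Proof.
have e1 := divn_eq j N; have e2 := odd_double_half (j %/ N).
have hr : (j %% N < N)%N by rewrite ltn_pmod.
move: e1 e2 hr; set h := (j %/ N)%N; set r := (j %% N)%N => e1 e2 hr.
have -> : j = ((h./2) * (2 * N) + (r + odd h * N))%N.
  rewrite e1 -{1}e2 -!muln2; case: (odd h) => /=; lia.
rewrite modnMDl modn_small //; case: (odd h) => /=; lia.
Qed.

Lemma sg_nred (j k : nat) : (k < N)%N ->
  sg j k = if (j %% N == k)%N then (-1) ^+ (j %/ N)%N else 0.
Proof.
move=> hk; rewrite /sg mod2N (modn_small (_ : k < 2 * N)%N); last lia.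
rewrite (modn_small (_ : k + N < 2 * N)%N); last lia.
have hr : (j %% N < N)%N by rewrite ltn_pmod.
rewrite -signr_odd; case: (odd (j %/ N)) => /=.
  rewrite mul1n eqn_add2r; case: eqP => [|_]; first lia.
  by case: eqP.
rewrite mul0n addn0; case: eqP => // _; case: eqP => //; lia.
Qed.

Lemma phi_sum (I : Type) (r : seq I) (P : pred I) (f : I -> int) :
  phi (\sum_(i <- r | P i) f i) = \sum_(i <- r | P i) phi (f i).
Proof. by apply: big_morph; [exact: phiD | exact: phi0]. Qed.

Lemma phi_sign (e : nat) : phi ((-1) ^+ e) = (-1) ^+ e.
Proof. by rewrite -signr_odd -[RHS]signr_odd; case: (odd e); rewrite /= ?phiN /phi. Qed.

Lemma E_rq (a : {poly int}) : eqv (rq N q a) a.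
Proof.
apply: E_lowN => k hk; rewrite E_small //; last exact: size_poly.
rewrite coef_poly hk phi_modq /nred phi_sum /E big_mkord [LHS]big_mkcond /=.
apply: eq_bigr => j _; rewrite sg_nred //; case: eqP => _; last by rewrite mul0r.
by rewrite phiM phi_sign.
Qed.


Lemma sg_modeq1 (j1 j2 k : nat) : (j1 = j2 %[mod 2 * N])%N -> sg j1 k = sg j2 k.
Proof. by move=> h; rewrite /sg h. Qed.

Lemma eq_blk (D a b c d : nat) : (b < D)%N -> (d < D)%N ->
  (a * D + b == c * D + d)%N = (a == c) && (b == d).
Proof.
move=> hb hd; have hD : (0 < D)%N by lia.
apply/eqP/andP => [e|[/eqP-> /eqP->]] //.
have e1 := congr1 (divn^~ D) e; have e2 := congr1 (modn^~ D) e.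
rewrite /= !divnMDl // !divn_small // !addn0 in e1.
rewrite /= !modnMDl !modn_small // in e2.
by rewrite e1 e2.
Qed.

Lemma blk_lt (n D a b : nat) : (a < n)%N -> (b < D)%N -> (a * D + b < n * D)%N.
Proof.
move=> ha hb; have : (a.+1 * D <= n * D)%N by rewrite leq_mul2r ha orbT.
rewrite mulSn; move: (a * D)%N (n * D)%N => x y; lia.
Qed.

Lemma sg_core (n D a b c d : nat) : N = (n * D)%N -> (a < n)%N -> (c < n)%N ->
  (b < D)%N -> (d < D)%N ->
  sg (2 * N + (a * D + b)) (c * D + d) = if (a == c) && (b == d) then 1 else 0.
Proof.
move=> hN ha hc hb hd.
rewrite (@sg_modeq1 _ (a * D + b)); last by rewrite modnDl.
rewrite sg_small ?eq_blk // hN; exact: blk_lt.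
Qed.

Lemma E_shiftneg (z : {poly int}) (r k : nat) : (r <= 2 * N)%N ->
  E ('X^(2 * N - r) * z) k = E z (k + r).
Proof.
move=> hr; rewrite -(E_X z (2 * N - r) (k + r)); apply: E_modeq.
by rewrite -addnA subnKC // modnDr.
Qed.

Lemma E_negmul (k0 : nat) (z : {poly int}) (k : nat) :
  E (Xneg N q k0 * z) k = E z (k + k0 %% (2 * N)).
Proof.
rewrite (eqv_mull z (E_rq _)) E_shiftneg //.
by apply: ltnW; rewrite ltn_pmod //; lia.
Qed.

Lemma Slot1E (a : {poly int}) : Slot N 1 a = (a`_0)%:P.
Proof. by rewrite /Slot big_ord1 mul0n expr0 mulr1. Qed.

Lemma sum_delta (n : nat) (f : 'I_n -> 'F_q) (k : 'I_n) :
  \sum_(i < n) f i * (if i == k then 1 else 0) = f k.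
Proof.
rewrite (bigD1 k) //= eqxx mulr1 big1 ?addr0 // => i /negbTE ->.
by rewrite mulr0.
Qed.

Lemma E_mono3 (c d : int) (e1 e2 e3 k : nat) :
  E ((c%:P * 'X^e1) * 'X^e2 * (d%:P * 'X^e3)) k = phi c * phi d * sg (e1 + e2 + e3) k.
Proof.
have -> : (c%:P * 'X^e1) * 'X^e2 * (d%:P * 'X^e3) = (c * d)%:P * 'X^(e1 + e2 + e3).
  by rewrite !exprD polyCM; ring.
by rewrite E_scale E_Xn phiM.
Qed.

Lemma E_Pack (n D : nat) (a : 'cV[int]_n) (k : 'I_n) : N = (n * D)%N -> (N %/ n = D)%N ->
  E (Pack N q a) (k * D) = phi (a k 0).
Proof.
move=> hN hD; rewrite /Pack hD E_sum.
have hDp : (0 < D)%N by move: N_gt0; rewrite hN; case: D {hD hN} => //; rewrite muln0.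
have hk : (k * D < N)%N by rewrite hN -[(k * D)%N]addn0; apply: blk_lt.
rewrite -[RHS](sum_delta (fun i => phi (a i 0))).
apply: eq_bigr => i _; rewrite E_scale E_Xn sg_small //; last first.
  by rewrite hN -[(i * D)%N]addn0; apply: blk_lt.
by rewrite eqn_mul2r gtn_eqF //= phi_modq.
Qed.

Lemma size_Pack (n : nat) (a : 'cV[int]_n) : N = (n * (N %/ n))%N ->
  (size (Pack N q a) <= N)%N.
Proof.
move=> hN; have hDp : (0 < N %/ n)%N.
  by move: N_gt0; rewrite {1}hN; case: (N %/ n)%N => //; rewrite muln0.
apply/leq_sizeP => j hj; rewrite /Pack coef_sum big1 // => i _.
rewrite coefCM coefXn (_ : (j == i * (N %/ n)%N)%N = false) ?mulr0 //.
apply/negbTE; have : (i * (N %/ n) + 0 < n * (N %/ n))%N by apply: blk_lt.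
move: (i * (N %/ n))%N (n * (N %/ n))%N hN hj => x y -> hj; lia.
Qed.


Lemma Dpos (n D : nat) : N = (n * D)%N -> (0 < D)%N.
Proof. by move: N_gt0 => + hN; rewrite hN; case: D {hN} => //; rewrite muln0. Qed.

Lemma npos (n D : nat) : N = (n * D)%N -> (0 < n)%N.
Proof. by move: N_gt0 => + hN; rewrite hN; case: n {hN}. Qed.

Lemma sg_G (n D i k j j' : nat) : N = (n * D)%N -> (i < n)%N -> (k < n)%N ->
  (j < D)%N -> (j' < D)%N ->
  sg (2 * N - j + i * D + j') (k * D) = if (i == k) && (j' == j) then 1 else 0.
Proof.
move=> hN hi hk hj hj'.
have hDN : (D <= N)%N by rewrite hN leq_pmull // (npos hN).
rewrite -(sg_shift _ _ j).
have -> : (2 * N - j + i * D + j' + j = 2 * N + (i * D + j'))%N.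
  by move: (i * D)%N => x; lia.
by apply: (sg_core hN).
Qed.

Lemma E_Gy (n p D : nat) (Gb : 'M[int]_(n, p)) (yb : 'cV[int]_p) (k : 'I_n) :
  N = (n * D)%N -> (N %/ n = D)%N -> (p <= D)%N ->
  E (Gtil N q Gb * ytil N q yb) (k * D) = \sum_(j < p) phi (Gb k j) * phi (yb j 0).
Proof.
move=> hN hD hp.
have hDN : (D <= N)%N by rewrite hN leq_pmull // (npos hN).
set A' := \sum_(i < n) (\sum_(j < p) (Gb i j)%:P * 'X^(2 * N - j)) * 'X^(i * D).
set B' := \sum_(j < p) (yb j 0)%:P * 'X^j.
have eA : eqv (Gtil N q Gb) A'.
  rewrite /Gtil hD; apply: eqv_trans (E_rq _) _; apply: eqv_sum => i _.
  apply: eqv_mull; apply: eqv_trans (E_rq _) _; apply: eqv_sum => j _.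
  apply: eqv_mul (eqv_refl _) _; rewrite /Xneg; apply: eqv_trans (E_rq _) _.
  have hj2 : (j < 2 * N)%N by have := ltn_ord j; lia.
  by rewrite (modn_small hj2); exact: eqv_refl.
have eB : eqv (ytil N q yb) B' by apply: E_rq.
rewrite (eqv_mul eA eB) /A' /B' mulr_suml E_sum.
rewrite -[RHS](sum_delta (fun i => \sum_(j < p) phi (Gb i j) * phi (yb j 0)) k).
apply: eq_bigr => i _; rewrite !mulr_suml E_sum.
apply: eq_bigr => j _; rewrite mulr_sumr E_sum.
rewrite -[RHS](sum_delta (fun j' => phi (Gb i j) * phi (yb j' 0) * (if i == k then 1 else 0)) j).
apply: eq_bigr => j' _; rewrite E_mono3 (sg_G hN) //; last by apply: leq_trans hp.
  have -> : ((i : nat) == k) = (i == k) by [].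
  have -> : ((j' : nat) == j) = (j' == j) by [].
  by case: (i == k); case: (j' == j); rewrite /= ?mulr0 ?mulr1.
by apply: leq_trans hp.
Qed.

Lemma sg_H (n D D' tau i i' j k : nat) : N = (n * D)%N -> D = (tau * D')%N ->
  (i < tau)%N -> (i' < tau)%N -> (j < n)%N -> (k < n)%N ->
  sg (2 * N - j * D + i' * D' + k * D) (i * D') =
    if (k == j) && (i' == i) then 1 else 0.
Proof.
move=> hN hD hi hi' hj hk.
have hD' : (0 < D')%N by move: (Dpos hN); rewrite hD; case: D' {hD} => //; rewrite muln0.
have hjD : (j * D + 0 < N)%N by rewrite hN; apply: blk_lt => //; exact: (Dpos hN).
rewrite -(sg_shift _ _ (j * D)).
have -> : (2 * N - j * D + i' * D' + k * D + j * D = 2 * N + (k * D + i' * D'))%N.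
  by move: hjD; move: (j * D)%N (i' * D')%N (k * D)%N => x y z; lia.
rewrite [(i * D' + _)%N]addnC (sg_core hN) //; last 2 first.
- by rewrite hD ltn_mul2r hD' hi'.
- by rewrite hD ltn_mul2r hD' hi.
by rewrite eqn_mul2r (gtn_eqF hD').
Qed.

Lemma E_HS (n m tau D D' : nat) (Hb : 'M[int]_(m, n)) (z : {poly int}) (i : 'I_m) :
  N = (n * D)%N -> (N %/ n = D)%N -> (N %/ (n * tau) = D')%N -> D = (tau * D')%N ->
  (m <= tau)%N -> (size z <= N)%N ->
  E (Htil N q tau Hb * Slot N n z) (i * D') = \sum_(j < n) phi (Hb i j) * E z (j * D).
Proof.
move=> hN hD hD' hDD hm hz.
set A' := \sum_(i' < m) (\sum_(j < n) (Hb i' j)%:P * 'X^(2 * N - j * D)) * 'X^(i' * D').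
have eA : eqv (Htil N q tau Hb) A'.
  rewrite /Htil hD' hD; apply: eqv_trans (E_rq _) _; apply: eqv_sum => i' _.
  apply: eqv_mull; apply: eqv_trans (E_rq _) _; apply: eqv_sum => j _.
  apply: eqv_mul (eqv_refl _) _; rewrite /Xneg; apply: eqv_trans (E_rq _) _.
  have hjD : (j * D + 0 < N)%N by rewrite hN; apply: blk_lt => //; exact: (Dpos hN).
  have hj2 : (j * D < 2 * N)%N by move: hjD; move: (j * D)%N => x; lia.
  by rewrite (modn_small hj2); exact: eqv_refl.
rewrite (eqv_mull _ eA) /A' /Slot hD mulr_suml E_sum.
rewrite -[RHS](sum_delta (fun i' => \sum_(j < n) phi (Hb i' j) * E z (j * D)) i).
apply: eq_bigr => i' _; rewrite !mulr_suml E_sum.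
apply: eq_bigr => j _; rewrite mulr_sumr E_sum.
rewrite -[RHS](sum_delta (fun k : 'I_n => phi (Hb i' j) * E z (k * D) * (if i' == i then 1 else 0)) j).
apply: eq_bigr => k _; rewrite E_mono3 (sg_H hN hDD) //; try exact: (leq_trans _ hm).
rewrite E_small //; last by rewrite hN -[(k * D)%N]addn0; apply: blk_lt => //; exact: (Dpos hN).
have -> : ((k : nat) == j) = (k == j) by [].
have -> : ((i' : nat) == i) = (i' == i) by [].
by case: (k == j); case: (i' == i); rewrite /= ?mulr0 ?mulr1.
Qed.


Lemma sum_starts (n : nat) (ds : seq nat) (c : nat -> nat -> int) (k : nat)
  (g : nat -> 'F_q) :
  all (fun d => 0 < d)%N ds -> sumn ds = n -> (k < n)%N ->
  \sum_(j < n) phi (Fbar_entry ds c k j - S_entry n k j) * g j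
  = \sum_(l < size ds) phi (Fbar_entry ds c k (bstart ds l) - S_entry n k (bstart ds l))
      * g (bstart ds l).
Proof.
move=> hpos hs hk.
pose f := fun j : nat => phi (Fbar_entry ds c k j - S_entry n k j) * g j.
have hbl : forall l : 'I_(size ds), (bstart ds l < n)%N.
  move=> l; rewrite -hs -bstart_size; apply: bstart_lt => //.
have hr : forall l : 'I_(size ds), f (bstart ds l) =
    \sum_(j < n) f j * (if (j : nat) == bstart ds l then 1 else 0).
  move=> l; rewrite (bigD1 (Ordinal (hbl l))) //= eqxx mulr1 big1 ?addr0 // => j hj.
  by rewrite (_ : ((j : nat) == bstart ds l) = false) ?mulr0 //; exact: negbTE hj.
rewrite -/f (eq_bigr _ (fun l _ => hr l)) exchange_big /=.
apply: eq_bigr => j _.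
case: (pickP (fun l : 'I_(size ds) => (j : nat) == bstart ds l)) => [l0 hl0 | hnone].
  rewrite (bigD1 l0) //= hl0 mulr1 big1 ?addr0 // => l hl.
  case: eqP => [e|]; last by rewrite mulr0.
  exfalso; move: hl => /eqP; apply; apply: val_inj => /=.
  by apply: (bstart_inj hpos) => //; rewrite -e; apply/eqP.
rewrite big1 => [|l _]; last by rewrite hnone mulr0.
rewrite /f (@FS_zero n) ?subrr ?phi0 ?mul0r //.
move=> l hl; have := hnone (Ordinal hl); by rewrite /= => ->.
Qed.

Lemma phi_if (b : bool) (x y : int) : phi (if b then x else y) = if b then phi x else phi y.
Proof. by case: b. Qed.

Lemma sum_nat_delta (n x : nat) (g : nat -> 'F_q) : (x < n)%N ->
  \sum_(j < n) (if (j : nat) == x then 1 else 0) * g j = g x.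
Proof.
move=> hx; rewrite (bigD1 (Ordinal hx)) //= eqxx mul1r big1 ?addr0 // => j hj.
by rewrite (_ : ((j : nat) == x) = false) ?mul0r //; exact: negbTE hj.
Qed.

Lemma sum_S (n k : nat) (g : nat -> 'F_q) : (k < n)%N ->
  \sum_(j < n) phi (S_entry n k j) * g j = if (k.+1 < n)%N then g k.+1 else - g 0%N.
Proof.
move=> hk; case: ltnP => h.
  rewrite -(sum_nat_delta g h); apply: eq_bigr => j _.
  rewrite /S_entry (_ : (k == n.-1) = false) ?andFb; last by apply/negbTE; lia.
  by rewrite !phi_if.
have hn : (0 < n)%N by lia.
rewrite -(sum_nat_delta g hn) -sumrN; apply: eq_bigr => j _.
rewrite /S_entry (_ : ((j : nat) == k.+1) = false); last first.
  by apply/negbTE; have := ltn_ord j; lia.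
rewrite (_ : (k == n.-1) = true) /=; last by apply/eqP; lia.
rewrite !phi_if phiN; case: ifP => _; rewrite /phi ?mulN1r ?mul1r ?mul0r ?oppr0 //.
Qed.


Lemma E_rqE (a : {poly int}) (k : nat) : E (rq N q a) k = E a k.
Proof. exact: E_rq. Qed.

Lemma ztraj_inv (n p D : nat) (ds : seq nat) (c : nat -> nat -> int)
  (Gb : 'M[int]_(n, p)) (z0 : 'cV[int]_n) (yb : nat -> 'cV[int]_p) :
  all (fun d => 0 < d)%N ds -> sumn ds = n -> N = (n * D)%N -> (N %/ n = D)%N ->
  (p <= D)%N ->
  forall t, (size (ztraj N q ds c Gb z0 yb t) <= N)%N /\
    (forall k : 'I_n, E (ztraj N q ds c Gb z0 yb t) (k * D)%N
                     = phi (zbt (Fbar_mx n ds c) Gb z0 yb t k 0)).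
Proof.
move=> hpos hs hN hD hp.
have hDp := Dpos hN.
have hDN : (D <= N)%N by rewrite hN leq_pmull // (npos hN).
elim=> [|t [hsz IH]].
  split; first by apply: size_Pack; rewrite hD.
  by move=> k; apply: E_Pack.
split; first exact: size_poly.
move=> k; rewrite /= E_rqE !E_add.
set z := ztraj N q ds c Gb z0 yb t.
set zb := zbt (Fbar_mx n ds c) Gb z0 yb t.
pose g := fun j : nat => phi (zb (insubd k j) 0).
have hg : forall j : 'I_n, phi (zb j 0) = g j by move=> j; rewrite /g valKd.
have hgE : forall j, (j < n)%N -> g j = E z (j * D).
  by move=> j hj; rewrite /g -IH insubdK.
have hkn : (k < n)%N := ltn_ord k.
have e1 : E (\sum_(k0 < size ds) Ftil N q n ds c k0 *
              Slot N 1 (rq N q (Xneg N q (bstart ds k0 * (N %/ n)) * z))) (k * D)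
        = \sum_(l < size ds) phi (Fbar_entry ds c k (bstart ds l) - S_entry n k (bstart ds l))
            * g (bstart ds l).
  rewrite E_sum; apply: eq_bigr => l _.
  have hl : (bstart ds l < n)%N by rewrite -hs -bstart_size; apply: bstart_lt.
  rewrite Slot1E mulrC E_scale -E_small //; last exact: size_poly.
  rewrite E_rqE E_negmul add0n hD modn_small; last first.
    have : (bstart ds l * D + 0 < N)%N by rewrite hN; apply: blk_lt.
    move: (bstart ds l * D)%N => x; lia.
  rewrite -hgE // /Ftil (@E_Pack n D _ k hN hD) mxE mulrC.
  done.
have e2 : E (Xneg N q (N %/ n) * z) (k * D) = if (k.+1 < n)%N then g k.+1 else - g 0%N.
  rewrite E_negmul hD modn_small; last lia.
  case: ltnP => h; first by rewrite hgE // mulSn addnC.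
  have hk1 : k.+1 = n by lia.
  rewrite (_ : (k * D + D = 0 + N)%N); last by rewrite hN add0n -[in RHS]hk1 mulSn addnC.
  by rewrite E_N hgE ?mul0n //; lia.
have e3 := E_Gy Gb (yb t) k hN hD hp.
rewrite e1 e2 e3 -(sum_S g hkn).
rewrite /zb /= mxE phiD !mxE !phi_sum; congr (_ + _).
  rewrite -(sum_starts c g hpos hs hkn) -big_split /=.
  apply: eq_bigr => j _; rewrite ?mxE phiM hg -mulrDl -phiD subrK.
  done.
by apply: eq_bigr => j _; rewrite phiM.
Qed.


Lemma util_coef (n p m tau D D' : nat) (ds : seq nat) (c : nat -> nat -> int)
  (Gb : 'M[int]_(n, p)) (Hb : 'M[int]_(m, n)) (z0 : 'cV[int]_n)
  (yb : nat -> 'cV[int]_p) (t : nat) (i : 'I_m) :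
  all (fun d => 0 < d)%N ds -> sumn ds = n -> N = (n * D)%N -> (N %/ n = D)%N ->
  (p <= D)%N -> (N %/ (n * tau) = D')%N -> D = (tau * D')%N -> (m <= tau)%N ->
  phi ((util N q tau ds c Gb Hb z0 yb t)`_(i * D'))
  = phi ((Hb *m zbt (Fbar_mx n ds c) Gb z0 yb t) i 0).
Proof.
move=> hpos hs hN hD hp hD' hDD hm.
have [hsz hz] := ztraj_inv c Gb z0 yb hpos hs hN hD hp t.
have hDp := Dpos hN.
have hD'p : (0 < D')%N by move: hDp; rewrite hDD; case: D' {hDD hD'} => //; rewrite muln0.
have hDN : (D <= N)%N by rewrite hN leq_pmull // (npos hN).
have hiN : (i * D' < N)%N.
  apply: (leq_trans _ hDN); rewrite hDD ltn_mul2r hD'p /=.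
  exact: leq_trans (ltn_ord i) hm.
rewrite -E_small //; last exact: size_poly.
rewrite /util E_rqE (@E_HS n m tau D D' Hb _ i hN hD hD' hDD hm hsz) mxE phi_sum.
by apply: eq_bigr => j _; rewrite hz phiM.
Qed.

Lemma phi_eq0 (x : int) : phi x = 0 -> (q %| `|x|)%N.
Proof.
have key : forall k : nat, phi k%:Z = 0 -> (q %| k)%N.
  move=> k; rewrite /phi -pmulrn => h.
  by rewrite (dvdn_pcharf (pchar_Fp q_prime)) h.
case: x => k; first exact: key.
rewrite NegzE phiN => /eqP; rewrite oppr_eq0 => /eqP; exact: key.
Qed.

End NR.

Lemma modq_range (q : nat) (a : int) : (0 < q)%N ->
  - (q%:Z) <= 2 * modq q a < q%:Z.
Proof.
move=> hq; rewrite /modq.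
have hd : (2 * q%:Z != 0) by lia.
have hd' : (0 < 2 * q%:Z) by lia.
have e := divz_eq (2 * a + q%:Z) (2 * q%:Z).
have h1 := modz_ge0 (2 * a + q%:Z) hd.
have h2 := ltz_pmod (2 * a + q%:Z) hd'.
move: e h1 h2.
set x := ((2 * a + q%:Z) %/ (2 * q%:Z))%Z.
set r := ((2 * a + q%:Z) %% (2 * q%:Z))%Z.
move=> e h1 h2; apply/andP; split; nia.
Qed.

Lemma vnorm_ge (k : nat) (v : 'cV[rat]_k) (i : 'I_k) : `|v i 0| <= vnorm v.
Proof.
rewrite /vnorm.
have : i \in index_enum 'I_k by rewrite mem_index_enum.
elim: (index_enum 'I_k) => [|x s IH] //=.
rewrite inE big_cons => /orP[/eqP <-|/IH h]; rewrite le_max ?lexx //.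
by rewrite h orbT.
Qed.


Theorem theorem1
  (n m p N q : nat)
  (F : 'M[int]_n) (G : 'M[rat]_(n, p)) (H : 'M[rat]_(m, n))
  (xini : 'cV[rat]_n) (y : nat -> 'cV[rat]_p)
  (T : 'M[rat]_n) (ds : seq nat) (c : nat -> nat -> int)
  (L s1 s2 : rat)
  (Gbar : 'M[int]_(n, p)) (Hbar : 'M[int]_(m, n)) (zini : 'cV[int]_n)
  (ybar : nat -> 'cV[int]_p) :
  (* rational canonical form  Fbar = T F T^-1 *)
  T \in unitmx ->
  rcf_data n ds c ->
  map_mx intr (Fbar_mx n ds c) = T *m map_mx intr F *m invmx T ->
  (* scale factors *)
  0 < L -> L^-1 \is a Num.nat ->
  0 < s1 -> s1^-1 \is a Num.nat ->
  0 < s2 -> s2^-1 \is a Num.nat ->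
  map_mx intr Gbar = s1^-1 *: (T *m G) ->
  map_mx intr Hbar = s2^-1 *: (H *m invmx T) ->
  map_mx intr zini = (L * s1)^-1 *: (T *m xini) ->
  (forall t, map_mx intr (ybar t) = L^-1 *: y t) ->
  (* parameters *)
  prime q ->
  (exists k, N = 2 ^ k)%N ->
  (exists k, n = 2 ^ k)%N ->
  (n %| N)%N ->
  (n * p <= N)%N ->
  (tau_of m <= N %/ n)%N ->
  (* no overflow *)
  (exists B : rat, B < q%:R / 2 /\
     forall t,
       vnorm ((L * s1)^-1 *: (T *m xtraj (map_mx intr F) G xini y t)) <= B /\
       vnorm ((L * s1 * s2)^-1 *: (H *m xtraj (map_mx intr F) G xini y t)) <= B) ->
  forall t,
    (L * s1 * s2) *: map_mx intr
        (Unpack N n (tau_of m) m (util N q (tau_of m) ds c Gbar Hbar zini ybar t))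
    = H *m xtraj (map_mx intr F) G xini y t.

Proof.
move=> hT [hpos [hsum _]] hF hL _ hs1 _ hs2 _ hG hH hz hy hq [a hNa] [b hnb] hnN hnp htau
  [B [hB hbd]] t.
have n_gt0 : (0 < n)%N by rewrite hnb expn_gt0.
have N_gt0 : (0 < N)%N by rewrite hNa expn_gt0.
have q_gt0 : (0 < q)%N by apply: prime_gt0.
set D := (N %/ n)%N.
have hND : N = (n * D)%N by rewrite /D mulnC divnK.
have hba : (b <= a)%N by rewrite -(dvdn_Pexp2l _ _ (ltnSn 1)) -hNa -hnb.
have hDpow : D = (2 ^ (a - b))%N by rewrite /D hNa hnb expnB.
set tau := tau_of m.
have htD : (tau %| D)%N.
  rewrite hDpow /tau /tau_of dvdn_exp2l // -(leq_exp2l _ _ (ltnSn 1)) -hDpow.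
  exact: htau.
set D' := (N %/ (n * tau))%N.
have hDD : D = (tau * D')%N by rewrite /D' divnMA -/D mulnC divnK.
have hm : (m <= tau)%N by exact: up_logP.
have hpD : (p <= D)%N by rewrite -(leq_pmul2l n_gt0) -hND.
set x := xtraj (map_mx intr F) G xini y.
set zb := zbt (Fbar_mx n ds c) Gbar zini ybar.
have hzb : forall t, map_mx intr (zb t) = (L * s1)^-1 *: (T *m x t).
  elim=> [|t' IH] //=.
  rewrite map_mxD !map_mxM IH hF hG hy.
  rewrite -!scalemxAr -!scalemxAl -!mulmxA (mulmxA (invmx T)) mulVmx // mul1mx.
  rewrite /x /= mulmxDr scalerDr !mulmxA; congr (_ + _).
  by rewrite scalerA invfM mulrC.
have hHz : map_mx intr (Hbar *m zb t) = (L * s1 * s2)^-1 *: (H *m x t).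
  rewrite map_mxM hzb hH -scalemxAr -scalemxAl scalerA -!mulmxA (mulmxA (invmx T)).
  by rewrite mulVmx // mul1mx -invfM mulrC.
have hU : Unpack N n tau m (util N q tau ds c Gbar Hbar zini ybar t) = Hbar *m zb t.
  apply/matrixP => i j; rewrite (ord1 j) [LHS]mxE -/D'.
  set v := (util N q tau ds c Gbar Hbar zini ybar t)`_(i * D').
  set w := (Hbar *m zb t) i 0.
  have hphi : phi q v = phi q w.
    exact: (@util_coef q N hq N_gt0 n p m tau D D').
  have hv : - (q%:Z) <= 2 * v < q%:Z.
    rewrite /v /util coef_poly.
    case: ifP => _; first exact: modq_range.
    by rewrite mulr0; lia.
  have hw : `|w| * 2 < q%:Z.
    have e : (w%:~R : rat) = ((L * s1 * s2)^-1 *: (H *m x t)) i 0.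
      by rewrite -hHz mxE.
    have := vnorm_ge ((L * s1 * s2)^-1 *: (H *m x t)) i.
    rewrite -e -intr_norm => h1.
    have h2 := (proj2 (hbd t)).
    have h3 : (`|w|%:~R : rat) * 2 < q%:R by move: hB; lra.
    by rewrite -(ltr_int rat) intrM.
  have hd : (q %| `|v - w|)%N.
    by apply: (phi_eq0 hq); rewrite /phi intrB; apply/eqP; rewrite subr_eq0 -/(phi q v) hphi.
  have hlt : (`|v - w| < q)%N by lia.
  have : `|v - w|%N = 0%N.
    by apply/eqP; apply: contraTT hlt; rewrite -lt0n -leqNgt => h; apply: dvdn_leq.
  by move/eqP; rewrite absz_eq0 subr_eq0 => /eqP.
rewrite hU hHz scalerA mulfV ?scale1r //.
by rewrite !mulf_neq0 // gt_eqF.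
Qed.
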